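(* Let $A\in\mathbb{R}^{n\times n}$ be a matrix diagonalizable over $\mathbb{C}$ whose eigenvalues are roots of one quadratic polynomial $X^2-pX-q$ with $p,q\in\mathbb{Z}$ and negative discriminant. Then there exists a generic cut-and-project scheme $\Lambda=(\mathcal{L}\subset\mathbb{R}^{n+2},\mathbb{R}^n)$ with self-similarity $A$, and $n+2$ is the minimal dimension of a lattice defining such a scheme.
   Context: A lattice $\mathcal{L}\subset\mathbb{R}^s$ is $\{L\mathbf{r}:\mathbf{r}\in\mathbb{Z}^s\}$ for a non-singular $L\in\mathbb{R}^{s\times s}$ (an associated matrix). For $1\le n<s$ the scheme $(\mathcal{L}\subset\mathbb{R}^s,\mathbb{R}^n)$ has projections $\pi_\parallel(\mathbf{x})=(x_1,\dots,x_n)^\top$, $\pi_\perp(\mathbf{x})=(x_{n+1},\dots,x_s)^\top$; it is generic if $\pi_\parallel|_{\mathcal{L}}$ and $\pi_\perp|_{\mathcal{L}}$ are injective and $\pi_\perp(\mathcal{L})$ is dense in $\mathbb{R}^{s-n}$. $A$ is a self-similarity of a generic scheme with associated matrix $L$ if $A\pi_\parallel(\mathcal{L})\subset\pi_\parallel(\mathcal{L})$ and there exist $C\in\mathbb{Z}^{s\times s}$, $B\in\mathbb{R}^{(s-n)\times(s-n)}$ with $\begin{pmatrix}A&O\\O&B\end{pmatrix}L=LC$. *)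

(* Defs.v *)
From HB Require Import structures.
From mathcomp Require Import all_boot all_order all_algebra.
From mathcomp Require Import reals complex.
Set Implicit Arguments. Unset Strict Implicit. Unset Printing Implicit Defensive.
Import Order.TTheory GRing.Theory Num.Theory.
Local Open Scope ring_scope.

Definition lat_pt (R : realType) (n m : nat) (L : 'M[R]_(n + m))
  (r : 'cV[int]_(n + m)) : 'cV[R]_(n + m) :=
  L *m map_mx (fun z : int => z%:~R) r.

Definition pi_par (R : realType) (n m : nat) (x : 'cV[R]_(n + m)) : 'cV[R]_n :=
  usubmx x.
Definition pi_perp (R : realType) (n m : nat) (x : 'cV[R]_(n + m)) : 'cV[R]_m :=
  dsubmx x.

Definition generic_scheme (R : realType) (n m : nat) (L : 'M[R]_(n + m)) : Prop :=
  [/\ (0 < n)%N && (0 < m)%N, L \in unitmx,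
      (forall r1 r2, pi_par (lat_pt L r1) = pi_par (lat_pt L r2) ->
                     lat_pt L r1 = lat_pt L r2),
      (forall r1 r2, pi_perp (lat_pt L r1) = pi_perp (lat_pt L r2) ->
                     lat_pt L r1 = lat_pt L r2) &
      (forall (y : 'cV[R]_m) (e : R), 0 < e ->
         exists r, forall i, `|pi_perp (lat_pt L r) i 0 - y i 0| < e)].

Definition self_similarity (R : realType) (n m : nat) (A : 'M[R]_n)
  (L : 'M[R]_(n + m)) : Prop :=
  (forall r, exists r', A *m pi_par (lat_pt L r) = pi_par (lat_pt L r')) /\
  exists (C : 'M[int]_(n + m)) (B : 'M[R]_m),
    block_mx A 0 0 B *m L = L *m map_mx (fun z : int => z%:~R) C.

Definition complexify (R : realType) (n : nat) (A : 'M[R]_n) : 'M[R[i]]_n :=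
  map_mx (fun x : R => (x%:C)%C) A.

(* Main.v *)
Require Import Defs.
From HB Require Import structures.
From mathcomp Require Import all_boot all_order all_algebra.
From mathcomp Require Import reals complex.
From mathcomp Require Import ring lra zify.
From mathcomp Require Import finmap.
From mathcomp Require Import boolp classical_sets cardinality ereal lebesgue_measure measure.
Import Order.TTheory GRing.Theory Num.Theory.
Set Implicit Arguments. Unset Strict Implicit. Unset Printing Implicit Defensive.
Local Open Scope ring_scope.

Section Dense.
Variable R : realType.
Variable t : R.
Hypothesis irr : forall a b : int, a%:~R + b%:~R * t = 0 :> R -> b = 0.

Definition GG (x : R) := exists a b : int, x = a%:~R + b%:~R * t.

Lemma GG_sub x y : GG x -> GG y -> GG (x - y).
Proof. move=> [a [b ->]] [c [d ->]]; exists (a - c), (b - d); rewrite !rmorphB /=; ring. Qed.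

Lemma GG_mulz x (m : int) : GG x -> GG (m%:~R * x).
Proof. move=> [a [b ->]]; exists (m * a), (m * b); rewrite !rmorphM /=; ring. Qed.

Lemma GG1 : GG 1.
Proof. by exists 1, 0; rewrite !rmorph1 rmorph0 /=; ring. Qed.

Lemma no_int01 (a : int) : 0 < a%:~R :> R -> a%:~R < 1 :> R -> False.
Proof.
move=> h1 h2; rewrite ltr0z in h1.
rewrite gtz0_ge1 -(@ler_int R) in h1.
lra.
Qed.

Lemma GG_step g : GG g -> 0 < g -> g < 1 -> exists g', GG g' /\ 0 < g' /\ g' <= g / 2.
Proof.
move=> Gg g0 g1.
pose k := Num.floor (g^-1).
have hk1 : k%:~R <= g^-1 by exact: Num.Theory.floor_le.
have hk2 : g^-1 < (k + 1)%:~R by exact: Num.Theory.floorD1_gt.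
pose h := 1 - k%:~R * g.
have Gh : GG h by apply: GG_sub; [exact: GG1| exact: GG_mulz].
have h0 : 0 <= h.
  rewrite -(ler_pM2r g0) mulVf ?gt_eqF // in hk1; rewrite /h; lra.
have hg : h < g.
  rewrite -(ltr_pM2r g0) mulVf ?gt_eqF // rmorphD /= mulrDl mul1r in hk2; rewrite /h; lra.
have hn0 : h != 0.
  apply/eqP => hz; move: Gg => [a [b gE]].
  have : (1 - k * a)%:~R + (- (k * b))%:~R * t = 0 :> R.
    rewrite rmorphB rmorphN !rmorphM /= rmorph1; rewrite /h gE in hz; lra.
  move/irr/eqP; rewrite oppr_eq0 mulf_eq0 => /orP[/eqP k0|/eqP b0].
    by move: hz; rewrite /h k0 mul0r subr0 => /eqP; rewrite oner_eq0.
  by apply: (@no_int01 a); rewrite -?gE; [move: g0|move: g1]; rewrite gE b0 mul0r addr0.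
have h0' : 0 < h by rewrite lt_neqAle eq_sym hn0 h0.
case: (lerP h (g / 2)) => hh.
  by exists h.
exists (g - h); split; first exact: GG_sub.
split; lra.
Qed.

Lemma GG_small (N : nat) : exists g, GG g /\ 0 < g /\ g * N.+1%:R < 1.
Proof.
elim: N => [|N [g [Gg [g0 gN]]]].
  pose g := t - (Num.floor t)%:~R.
  have Gg : GG g by exists (- Num.floor t), 1; rewrite /g rmorphN rmorph1 /=; ring.
  have gl : g < 1 by rewrite /g; have := Num.Theory.floorD1_gt t; rewrite rmorphD /= rmorph1; lra.
  have gge : 0 <= g by rewrite /g subr_ge0 Num.Theory.floor_le.
  have gn : g != 0.
    apply/eqP => gz.
    have : (- Num.floor t)%:~R + 1%:~R * t = 0 :> R by rewrite rmorphN rmorph1 /=; rewrite /g in gz; lra.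
    by move/irr.
  exists g; split => //; split; first by rewrite lt_neqAle eq_sym gn.
  by rewrite mulr1.
have g1 : g < 1.
  have : 1 <= N.+1%:R :> R by rewrite ler1n.
  nra.
have [g' [Gg' [g'0 g'h]]] := GG_step Gg g0 g1.
exists g'; split => //; split => //.
have : N.+2%:R = N.+1%:R + 1 :> R by rewrite -addn1 natrD.
have : 0 <= N%:R :> R by [].
rewrite -addn1 natrD; nra.
Qed.

Lemma dense_Zt (y e : R) : 0 < e -> exists a b : int, `|a%:~R + b%:~R * t - y| < e.
Proof.
move=> e0.
pose N := `|Num.floor (e^-1)|%N.
have hN : e^-1 < N.+1%:R.
  rewrite /N -addn1 natrD.
  have := Num.Theory.floorD1_gt (e^-1); rewrite rmorphD /= rmorph1.
  have : (Num.floor e^-1)%:~R <= `|Num.floor e^-1|%N%:R :> R.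
    by rewrite natr_absz ler_int ler_norm.
  lra.
have [g [Gg [g0 gN]]] := GG_small N.
have ge : g < e.
  have : e * e^-1 = 1 by rewrite mulfV ?gt_eqF.
  have : 0 < e^-1 by rewrite invr_gt0.
  nra.
pose m := Num.floor (y / g).
have hm1 : m%:~R <= y / g by exact: Num.Theory.floor_le.
have hm2 : y / g < (m + 1)%:~R by exact: Num.Theory.floorD1_gt.
have [a [b xE]] := GG_mulz m Gg.
exists a, b; rewrite -xE.
rewrite -(ler_pM2r g0) mulrVK ?unitfE ?gt_eqF // in hm1.
rewrite -(ltr_pM2r g0) mulrVK ?unitfE ?gt_eqF // rmorphD /= rmorph1 mulrDl mul1r in hm2.
rewrite ler0_norm; lra.
Qed.
End Dense.

Lemma usub_mul (R : pzRingType) m1 m2 n k (L : 'M[R]_(m1 + m2, n)) (X : 'M[R]_(n, k)) :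
  usubmx (L *m X) = usubmx L *m X.
Proof. by rewrite -{1}[L]vsubmxK mul_col_mx col_mxKu. Qed.

Lemma unit_inj (R : fieldType) k (L : 'M[R]_k) (x : 'cV[R]_k) :
  L \in unitmx -> L *m x = 0 -> x = 0.
Proof. by move=> Lu Lx; rewrite -(mulKmx Lu x) Lx mulmx0. Qed.

Lemma lat_sub (R : realType) n m (L : 'M[R]_(n + m)) r1 r2 :
  lat_pt L (r1 - r2) = lat_pt L r1 - lat_pt L r2.
Proof. by rewrite /lat_pt map_mxB mulmxBr. Qed.

Lemma selfsim_from_eq (R : realType) n m (A : 'M[R]_n) (B : 'M[R]_m) (L : 'M[R]_(n + m)) C :
  block_mx A 0 0 B *m L = L *m map_mx (fun z : int => z%:~R : R) C ->
  self_similarity A L.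
Proof.
move=> HB; split; last by exists C, B.
move=> r; exists (C *m r).
rewrite /pi_par /lat_pt map_mxM mulmxA -HB -mulmxA.
set Y := L *m map_mx _ r.
by rewrite -[in RHS](vsubmxK Y) mul_block_col col_mxKu mul0mx addr0.

Qed.

Section Transc.
Variables (R : realType) (t : R).
Hypothesis tr : forall P : {poly int}, (map_poly (fun z : int => z%:~R : R) P).[t] = 0 -> P = 0.

Lemma transc_sum K (f : nat -> int) :
  \sum_(j < K) (f j)%:~R * t ^+ j = 0 -> forall j, (j < K)%N -> f j = 0.
Proof.
move=> h.
have P0 : \poly_(j < K) f j = 0.
  apply: tr; rewrite -h.
  have -> : map_poly (fun z : int => z%:~R : R) (\poly_(j < K) f j) = \poly_(j < K) (f j)%:~R.
    apply/polyP => j; rewrite coef_map !coef_poly /=; by case: ifP.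
  by rewrite horner_poly.
by move=> j jK; have := congr1 (fun P : {poly int} => P`_j) P0; rewrite coef_poly jK coef0.
Qed.

Lemma irr_pow K : (0 < K)%N -> forall a b : int, a%:~R + b%:~R * t ^+ K = 0 :> R -> b = 0.
Proof.
move=> K0 a b h.
have P0 : a%:P + b *: 'X^K = 0.
  apply: tr; rewrite rmorphD /= map_polyC map_polyZ map_polyXn /= hornerE hornerZ hornerXn.
  by rewrite hornerC.
have := congr1 (fun P : {poly int} => P`_K) P0.
by rewrite coefD coefC coefZ coefXn eqxx mulr1 coef0 (negPf (lt0n_neq0 K0)) add0r.
Qed.

End Transc.

Definition compm (R : pzRingType) K (p q : R) : 'M[R]_(K + K) :=
  block_mx 0 q%:M 1%:M p%:M.

Lemma map_compm (R : realType) K (p q : int) :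
  map_mx (fun z : int => z%:~R : R) (compm K p q) = compm K p%:~R q%:~R.
Proof. by rewrite /compm map_block_mx map_mx0 !map_scalar_mx /= rmorph1. Qed.

Module Constr.
Section Construct.
Variables (R : realType) (k : nat) (p q : int).
Local Notation K := k.+1.
Local Notation N := (K + K)%N.
Variables (A : 'M[R]_N) (U : 'M[R]_(K, N)) (t s : R).
Hypothesis HA : A *m A = p%:~R *: A + (q%:~R)%:M.
Hypothesis fW : row_free (col_mx U (U *m A^T)).

Definition X : 'M[R]_N := row_mx U^T (A *m U^T).
Definition del : 'cV[R]_K := delta_mx 0 0.
Definition E : 'M[R]_(N, 1 + 1) := block_mx del 0 0 del.
Definition tau : 'rV[R]_K := \row_(j < K) t ^+ j.
Definition Z : 'M[R]_(1 + 1, N) := block_mx tau 0 0 tau.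
Definition V : 'M[R]_(1 + 1) := (t ^+ K)%:M.
Definition LL : 'M[R]_(N + (1 + 1)) := block_mx X (s *: (X *m E)) Z V.
Definition CC : 'M[int]_(N + (1 + 1)) := block_mx (compm K p q) 0 0 (compm 1 p q).
Definition BB : 'M[R]_(1 + 1) := compm 1 p%:~R q%:~R.

Lemma XE : X = (col_mx U (U *m A^T))^T.
Proof. by rewrite tr_col_mx trmx_mul trmxK. Qed.

Lemma X_unit : X \in unitmx.
Proof. by rewrite XE unitmx_tr -row_free_unit. Qed.

Lemma AX : A *m X = X *m compm K p%:~R q%:~R.
Proof.
rewrite /X /compm mul_mx_row mul_row_block mulmx0 add0r mulmx1.
rewrite mulmxA HA mulmxDl !mul_mx_scalar -scalemxAl mul_scalar_mx.
by rewrite addrC.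
Qed.

Lemma compE : compm K p%:~R q%:~R *m E = E *m compm 1 p%:~R q%:~R.
Proof.
rewrite /E /compm !mulmx_block !mulmx0 !mul0mx !addr0 !add0r !mul1mx !mulmx1.
by rewrite !mul_scalar_mx !mul_mx_scalar.
Qed.

Lemma compZ : compm 1 p%:~R q%:~R *m Z = Z *m compm K p%:~R q%:~R.
Proof.
rewrite /Z /compm !mulmx_block !mulmx0 !mul0mx !addr0 !add0r !mul1mx !mulmx1.
by rewrite !mul_scalar_mx !mul_mx_scalar.
Qed.

Lemma self_eq : block_mx A 0 0 BB *m LL = LL *m map_mx (fun z : int => z%:~R : R) CC.
Proof.
rewrite /CC map_block_mx !map_mx0 !map_compm /LL /BB /V !mulmx_block.
rewrite !mulmx0 !mul0mx !addr0 !add0r AX -scalemxAr mulmxA AX -mulmxA compE.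
by rewrite -scalemxAl mulmxA !mul1mx !mulmx1 !mul_scalar_mx !mul_mx_scalar.
Qed.

Local Notation mi := (map_mx (fun z : int => z%:~R : R)).

Lemma tau_del : tau *m del = 1.
Proof.
apply/matrixP => i j; rewrite !ord1 !mxE big_ord_recl big1 ?addr0.
  by rewrite !mxE !eqxx expr0 mulr1.
by move=> l _; rewrite !mxE /= mulr0.
Qed.

Lemma ZE1 : Z *m E = 1%:M.
Proof.
rewrite /Z /E mulmx_block !mulmx0 !mul0mx !addr0 !add0r tau_del.
by rewrite [RHS](scalar_mx_block 1 1).
Qed.

Lemma LL_fact : LL = block_mx X 0 Z ((t ^+ K - s)%:M) *m block_mx 1%:M (s *: E) 0 1%:M.
Proof.
rewrite mulmx_block !mulmx0 !mul0mx !addr0 !mulmx1 -!scalemxAr ZE1.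
rewrite /LL /V; congr block_mx.
by rewrite scalemx1 -raddfD /= addrC subrK.
Qed.

Lemma LL_unit : t ^+ K != s -> LL \in unitmx.
Proof.
move=> ts; rewrite LL_fact unitmx_mul !unitmxE det_lblock det_ublock !det1 mulr1.
rewrite det_scalar unitrM -!unitmxE X_unit /= unitfE expf_neq0 //.
  by rewrite unitr1.
by rewrite subr_eq0.
Qed.

Lemma lat_split (a b : 'cV[int]_K) (c e : 'cV[int]_1) :
  lat_pt LL (col_mx (col_mx a b) (col_mx c e)) =
  col_mx (X *m (col_mx (mi a) (mi b) + s *: col_mx (del *m mi c) (del *m mi e)))
         (col_mx (tau *m mi a + t ^+ K *: mi c) (tau *m mi b + t ^+ K *: mi e)).
Proof.
rewrite /lat_pt !map_col_mx /LL mul_block_col /Z /V /E !mul_block_col.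
rewrite !mul0mx !addr0 !add0r mulmxDr -!scalemxAr -!scalemxAl mul_scalar_mx.
by rewrite -mulmxA mul_block_col !mul0mx addr0 add0r scale_col_mx add_col_mx.
Qed.

Lemma piece_par (a : 'cV[int]_K) (c : 'cV[int]_1) :
  (forall a b : int, a%:~R + b%:~R * s = 0 :> R -> b = 0) ->
  mi a + s *: (del *m mi c) = 0 -> a = 0 /\ c = 0.
Proof.
move=> irr_s h.
have c0 : c = 0.
  apply/matrixP => i j; rewrite !ord1 [RHS]mxE.
  apply: (irr_s (a 0 0)).
  move/matrixP: h => /(_ 0 0); rewrite !mxE big_ord1 !mxE eqxx /=.
  lra.
split => //.
apply/matrixP => i j; move/matrixP: h => /(_ i j).
rewrite c0 map_mx0 mulmx0 scaler0 addr0 !mxE => /eqP; rewrite intr_eq0 => /eqP //.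
Qed.

Lemma piece_perp (a : 'cV[int]_K) (c : 'cV[int]_1) :
  (forall P : {poly int}, (map_poly (fun z : int => z%:~R : R) P).[t] = 0 -> P = 0) ->
  tau *m mi a + t ^+ K *: mi c = 0 -> a = 0 /\ c = 0.
Proof.
move=> tr h.
pose f j := if (j < K)%N then a (inord j) 0 else c 0 0.
have hs : \sum_(j < K.+1) (f j)%:~R * t ^+ j = 0.
  rewrite big_ord_recr /= {2}/f ltnn.
  move/matrixP: h => /(_ 0 0); rewrite !mxE => h00.
  apply: etrans h00; congr (_ + _); last by rewrite mulrC.
  apply: eq_bigr => j _; rewrite /f ltn_ord inord_val !mxE mulrC //.
have := transc_sum tr hs => fz.
split.
  apply/matrixP => i j; rewrite ord1 [RHS]mxE.
  by have := fz i (leq_trans (ltn_ord i) (leqnSn _)); rewrite /f ltn_ord inord_val.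
apply/matrixP => i j; rewrite !ord1 [RHS]mxE.
by have := fz K (ltnSn _); rewrite /f ltnn.
Qed.

Lemma LL_generic :
  (forall P : {poly int}, (map_poly (fun z : int => z%:~R : R) P).[t] = 0 -> P = 0) ->
  (forall a b : int, a%:~R + b%:~R * s = 0 :> R -> b = 0) ->
  t ^+ K != s ->
  generic_scheme LL /\ self_similarity A LL.
Proof.
move=> tr irr_s ts; split; last exact: selfsim_from_eq self_eq.
split => //; first exact: LL_unit.
- move=> r1 r2 h; suff -> : r1 = r2 by [].
  apply/eqP; rewrite -subr_eq0; apply/eqP.
  have : pi_par (lat_pt LL (r1 - r2)) = 0.
    by rewrite lat_sub /pi_par; apply/matrixP => i j; move/matrixP: h => /(_ i j); rewrite !mxE => ->; rewrite subrr.
  move: (r1 - r2) => d.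
  rewrite -[d]vsubmxK -[usubmx d]vsubmxK -[dsubmx d]vsubmxK.
  move: (usubmx (usubmx d)) (dsubmx (usubmx d)) (usubmx (dsubmx d)) (dsubmx (dsubmx d)) => a b c e.
  rewrite lat_split /pi_par col_mxKu => /(unit_inj X_unit).
  rewrite scale_col_mx add_col_mx => /eqP; rewrite col_mx_eq0 => /andP[/eqP h1 /eqP h2].
  have [-> ->] := piece_par irr_s h1; have [-> ->] := piece_par irr_s h2.
  by rewrite !col_mx0.
- move=> r1 r2 h; suff -> : r1 = r2 by [].
  apply/eqP; rewrite -subr_eq0; apply/eqP.
  have : pi_perp (lat_pt LL (r1 - r2)) = 0.
    by rewrite lat_sub /pi_perp; apply/matrixP => i j; move/matrixP: h => /(_ i j); rewrite !mxE => ->; rewrite subrr.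
  move: (r1 - r2) => d.
  rewrite -[d]vsubmxK -[usubmx d]vsubmxK -[dsubmx d]vsubmxK.
  move: (usubmx (usubmx d)) (dsubmx (usubmx d)) (usubmx (dsubmx d)) (dsubmx (dsubmx d)) => a b c e.
  rewrite lat_split /pi_perp col_mxKd => /eqP; rewrite col_mx_eq0 => /andP[/eqP h1 /eqP h2].
  have [-> ->] := piece_perp tr h1; have [-> ->] := piece_perp tr h2.
  by rewrite !col_mx0.
move=> y e e0.
have irrK := irr_pow tr (ltn0Sn k).
have [a0 [c0 h0]] := dense_Zt irrK (y 0 0) e0.
have [b0 [e1 h1]] := dense_Zt irrK (y 1 0) e0.
pose di : 'cV[int]_K := delta_mx 0 0.
exists (col_mx (col_mx (a0 *: di) (b0 *: di)) (col_mx c0%:M e1%:M)).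
have mid (z : int) : mi (z *: di) = z%:~R *: del.
  by apply/matrixP => i j; rewrite !mxE; case: (_ && _); rewrite /= ?mulr1 ?mulr0 ?rmorph0.
have mis (z : int) : mi (z%:M : 'M_1) = (z%:~R)%:M by rewrite map_scalar_mx.
rewrite lat_split /pi_perp col_mxKd !mid !mis -!scalemxAr tau_del => i.
rewrite mxE; case: splitP => j; rewrite ord1 !mxE /= mulr1 mulr1n [t ^+ K * _]mulrC => ei.
  by have -> : i = 0 by apply/val_inj; rewrite /= ei.
by have -> : i = 1 by apply/val_inj; rewrite /= ei.
Qed.
End Construct.
End Constr.

Lemma quad_of_diag (R : realType) n (A : 'M[R]_n) (p q : int) :
  diagonalizable (complexify A) ->
  (forall z : R[i], eigenvalue (complexify A) z -> z ^+ 2 - p%:~R * z - q%:~R = 0) ->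
  A *m A = p%:~R *: A + q%:~R%:M.
Proof.
move=> /diagonalizablePeigen [rs _ rsP] Hev.
set A' := complexify A.
pose G := A' *m A' - (p%:~R : R[i]) *: A' - (q%:~R : R[i])%:M.
have HG : (\sum_(r <- rs) eigenspace A' r <= kermx G)%MS.
  apply: (big_ind (fun X => (X <= kermx G)%MS)); first exact: sub0mx.
    by move=> X Y hX hY; rewrite addsmx_sub hX hY.
  move=> r _; apply/row_subP => i; set v := row i _.
  have /eigenspaceP vr : (v <= eigenspace A' r)%MS by exact: row_sub.
  rewrite sub_kermx; apply/eqP.
  have -> : v *m G = (r ^+ 2 - p%:~R * r - q%:~R) *: v.
    rewrite /G !mulmxBr mulmxA vr -scalemxAl vr -!scalemxAr vr mul_mx_scalar.
    by rewrite !scalerA !scalerBl expr2.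
  have [->|vn0] := eqVneq v 0; first by rewrite scaler0.
  by rewrite Hev ?scale0r //; apply/eigenvalueP; exists v.
rewrite rsP in HG.
have G0 : G = 0 by move: HG; rewrite sub_kermx mul1mx => /eqP.
apply/eqP; rewrite -subr_eq0 opprD addrA; apply/eqP.
apply: (@map_mx_inj _ _ (real_complex R)).
rewrite map_mx0 -G0 /G /A' /complexify.
rewrite map_mxB map_mxD map_mxM /=.
by rewrite map_mxN map_mxZ map_scalar_mx !rmorph_int.
Qed.

Lemma row_free_of_inj (R : fieldType) m k (M : 'M[R]_(m,k)) :
  (forall z : 'rV_m, z *m M = 0 -> z = 0) -> row_free M.
Proof.
move=> H; rewrite -kermx_eq0; apply/eqP/row_matrixP => i; rewrite row0.
by apply: H; apply/sub_kermxP; exact: row_sub.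
Qed.

Section Basis.
Variables (R : realType) (n : nat) (A : 'M[R]_n) (p q : R).
Hypothesis disc : p ^+ 2 + 4 * q < 0.
Hypothesis HA : A *m A = p *: A + q%:M.

Definition WW j (U : 'M[R]_(j,n)) := col_mx U (U *m A).

Lemma quad_pos (c d : R) : c ^+ 2 + c * d * p - d ^+ 2 * q = 0 -> c = 0 /\ d = 0.
Proof.
move=> h.
have hd : d = 0.
  have : (2 * c + p * d) ^+ 2 - (p ^+ 2 + 4 * q) * d ^+ 2 = 0.
    by rewrite -(mulr0 4) -h; ring.
  have : 0 <= (2 * c + p * d) ^+ 2 by exact: sqr_ge0.
  have : 0 <= d ^+ 2 by exact: sqr_ge0.
  move=> h1 h2 h3.
  have e : (- (p ^+ 2 + 4 * q)) * d ^+ 2 <= 0 by lra.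
  have : 0 < - (p ^+ 2 + 4 * q) by rewrite oppr_gt0.
  move=> /pmulr_rle0 => d2; rewrite d2 in e.
  have : d ^+ 2 = 0 by apply/eqP; rewrite eq_le e h1.
  by move/eqP; rewrite sqrf_eq0 => /eqP.
split => //; move: h; rewrite hd.
have -> : c ^+ 2 + c * 0 * p - 0 ^+ 2 * q = c ^+ 2 by ring.
by move/eqP; rewrite sqrf_eq0 => /eqP.
Qed.

Lemma WW_step j (U : 'M_(j,n)) : row_free (WW U) -> (j + j < n)%N ->
  exists U' : 'M_(1 + j, n), row_free (WW U').
Proof.
move=> fU ltn.
have : ~~ (1%:M <= WW U)%MS.
  rewrite sub1mx /row_full; move: fU; rewrite /row_free => /eqP ->.
  by rewrite neq_ltn ltn.
case/row_subPn => i; set v := row i 1%:M => vW.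
exists (col_mx v U); apply: row_free_of_inj => z.
rewrite /WW (mul_col_mx v U A) -[z]hsubmxK -[lsubmx z]hsubmxK -[rsubmx z]hsubmxK.
set c := lsubmx (lsubmx z); set z1 := rsubmx (lsubmx z).
set d := lsubmx (rsubmx z); set z2 := rsubmx (rsubmx z).
rewrite !mul_row_col [c]mx11_scalar [d]mx11_scalar !mul_scalar_mx => H.
set x := c 0 0 *: v + d 0 0 *: (v *m A).
have Hx : x + (z1 *m U + z2 *m (U *m A)) = 0 by rewrite addrACA in H.
have xE : x = - (z1 *m U + z2 *m (U *m A)) by apply/eqP; rewrite -addr_eq0 Hx.
have xW : (x <= WW U)%MS.
  apply/submxP; exists (- row_mx z1 z2); by rewrite mulNmx /WW mul_row_col.
have xAW : (x *m A <= WW U)%MS.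
  apply/submxP; exists (- row_mx (q *: z2) (z1 + p *: z2)).
  rewrite mulNmx /WW mul_row_col xE mulNmx mulmxDl -!mulmxA HA.
  rewrite mulmxDr mul_mx_scalar -!scalemxAr -scalemxAl mulmxDl -!scalemxAl.
  by rewrite mulmxDr -!scalemxAr [q *: _ + _]addrC -addrA.
have vAA : v *m A *m A = p *: (v *m A) + q *: v.
  by rewrite -mulmxA HA mulmxDr mul_mx_scalar -scalemxAr.
set w := v *m A in vAA x xE xW xAW H Hx.
set g := c 0 0 ^+ 2 + c 0 0 * d 0 0 * p - d 0 0 ^+ 2 * q.
have gv : g *: v = (c 0 0 + d 0 0 * p) *: x - d 0 0 *: (x *m A).
  rewrite /g /x mulmxDl -!scalemxAl -/w vAA.
  move: (c 0 0) (d 0 0) (w) (v) => c0 d0 w' v'.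
  apply/rowP => k; rewrite !mxE; ring.
have gW : (g *: v <= WW U)%MS.
  by rewrite gv; apply: addmx_sub; [apply: scalemx_sub | rewrite -scaleNr; apply: scalemx_sub].
have g0 : g = 0.
  apply/eqP; apply: contraR vW => gn0.
  have := scalemx_sub (g^-1) gW; by rewrite scalerA mulVf // scale1r.
have [c0 d0] := quad_pos g0.
have x0 : x = 0 by rewrite /x c0 d0 !scale0r addr0.
have : row_mx z1 z2 *m WW U = 0 *m WW U.
  by rewrite mul0mx /WW mul_row_col; move: Hx; rewrite x0 add0r.
move/(row_free_inj fU)/eqP; rewrite row_mx_eq0 => /andP[/eqP-> /eqP->].
by rewrite c0 d0 (raddf0 (@scalar_mx _ _)) !row_mx0.
Qed.

Lemma WW_exists j : (j + j <= n)%N -> exists U : 'M_(j,n), row_free (WW U).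
Proof.
elim: j => [|j IH] h.
  by exists 0; rewrite /row_free -leqn0 rank_leq_row.
have [U fU] := IH ltac:(lia).
have [U' fU'] := WW_step fU ltac:(lia).
by exists U'.
Qed.

Lemma row_free_le m k (M : 'M[R]_(m, k)) : row_free M -> (m <= k)%N.
Proof. by rewrite /row_free => /eqP <-; exact: rank_leq_col. Qed.

Lemma WW_final : exists k (U : 'M_(k,n)), (k + k = n)%N /\ row_free (WW U).
Proof.
have [U fU] := @WW_exists (n %/ 2)%N ltac:(lia).
exists (n %/ 2)%N, U; split => //.
case: (ltngtP (n %/ 2 + n %/ 2)%N n) => // h.
  have [U' /row_free_le] := WW_step fU h; lia.
lia.
Qed.
End Basis.

Lemma dsub_mul (R : pzRingType) m1 m2 n k (L : 'M[R]_(m1 + m2, n)) (X : 'M[R]_(n, k)) :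
  dsubmx (L *m X) = dsubmx L *m X.
Proof. by rewrite -{1}[L]vsubmxK mul_col_mx col_mxKd. Qed.





Lemma int_orth N (z : 'rV[int]_N) : (1 < N)%N -> exists2 r : 'cV[int]_N, r != 0 & z *m r = 0.
Proof.
move=> N1.
pose i0 : 'I_N := Ordinal (ltnW N1). pose i1 : 'I_N := Ordinal N1.
have zd i : z *m delta_mx i 0 = (z 0 i)%:M.
  by rewrite -colE; apply/matrixP => a b; rewrite !ord1 !mxE eqxx mulr1n.
have [z0|z0] := eqVneq (z 0 i0) 0.
  exists (delta_mx i0 0); last by rewrite zd z0 (raddf0 (@scalar_mx _ _)).
  by apply/negP => /eqP /matrixP /(_ i0 0); rewrite !mxE !eqxx /=.
exists (z 0 i1 *: delta_mx i0 0 - z 0 i0 *: delta_mx i1 0).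
  apply/negP => /eqP /matrixP /(_ i1 0); rewrite !mxE !eqxx /= mulr1 mulr0n mulr0 sub0r.
  by move/eqP; rewrite oppr_eq0 (negPf z0).
rewrite mulmxBr -!scalemxAr !zd.
by apply/matrixP => a b; rewrite !ord1 !mxE !eqxx /= !mulr1n mulrC subrr.
Qed.

Lemma lower_bound (R : realType) n (A : 'M[R]_n) (p q : int) :
  p ^+ 2 + 4 * q < 0 -> A *m A = p%:~R *: A + (q%:~R)%:M -> (0 < n)%N ->
  forall m (L : 'M[R]_(n + m)),
    generic_scheme L -> self_similarity A L -> (n + 2 <= n + m)%N.
Proof.
move=> disc HA n0 m L [/andP[_ m0] Lu injpar injperp dens] [_ [C [B HB]]].
have [m2|m1] := leqP 2 m; first by rewrite leq_add2l.
have {m0 m1} em : m = 1%N by lia.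
subst m; exfalso.
pose Cr := map_mx (fun z : int => z%:~R : R) C.
pose Fi := C *m C - p *: C - q%:M.
pose F := map_mx (fun z : int => z%:~R : R) Fi.
have FE : F = Cr *m Cr - p%:~R *: Cr - (q%:~R)%:M.
  by rewrite /F /Fi map_mxB map_mxB map_mxM map_mxZ map_scalar_mx.
pose D := block_mx A 0 0 B.
pose beta := B *m B - p%:~R *: B - (q%:~R)%:M.
have DD : D *m D - p%:~R *: D - (q%:~R)%:M = block_mx 0 0 0 beta.
  rewrite /D mulmx_block !mulmx0 !mul0mx !addr0 !add0r scale_block_mx.
  rewrite (scalar_mx_block n 1) HA !opp_block_mx !add_block_mx.
  congr block_mx; rewrite ?scaler0 ?oppr0 ?addr0 ?subr0 //.
  by rewrite addrAC addrK subrr.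
have LF : L *m F = block_mx 0 0 0 beta *m L.
  rewrite FE -DD !mulmxBr !mulmxBl mulmxA -HB -mulmxA -HB mulmxA.
  by rewrite -!scalemxAl -!scalemxAr HB mul_mx_scalar mul_scalar_mx.
pose u := dsubmx L.
have LFc : L *m F = col_mx 0 (beta *m u).
  by rewrite LF -{1}[L]vsubmxK mul_block_col !mul0mx !addr0 add0r.
have discR : (p%:~R : R) ^+ 2 + 4 * q%:~R < 0.
  by rewrite -(ltr_int R) rmorphD rmorphXn rmorphM /= in disc.
have beta0 : beta 0 0 != 0.
  have -> : beta 0 0 = B 0 0 * B 0 0 - p%:~R * B 0 0 - q%:~R.
    by rewrite /beta !mxE big_ord1 !eqxx mulr1n.
  apply/eqP => h.
  have : (2 * B 0 0 - p%:~R) ^+ 2 - ((p%:~R : R) ^+ 2 + 4 * q%:~R) = 0.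
    by rewrite -(mulr0 4) -h; ring.
  have : 0 <= (2 * B 0 0 - p%:~R) ^+ 2 by exact: sqr_ge0.
  lra.
have u0 : u != 0.
  apply/eqP => u0.
  have Lf : row_free L by rewrite row_free_unit.
  have : (delta_mx (0 : 'I_1) (rshift n (0 : 'I_1)) : 'rV_(n + 1)) *m L = 0 *m L.
    by rewrite mul0mx -rowE -row_dsubmx -/u u0 row0.
  move/(row_free_inj Lf)/matrixP/(_ 0 (rshift n 0)); rewrite !mxE !eqxx /=.
  by move/eqP; rewrite oner_eq0.
pose Li := invmx L.
pose g := rsubmx Li *m beta.
have FE2 : F = g *m u.
  rewrite -(mulKmx Lu F) LFc -/Li -{1}[Li]hsubmxK mul_row_col mulmx0 add0r.
  by rewrite /g mulmxA.
have [i gi] : exists i, g i 0 != 0.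
  apply/existsP; apply: contraT; rewrite negb_exists => /forallP gz.
  have g0 : g = 0 by apply/matrixP => a b; rewrite ord1 [RHS]mxE; apply/eqP; have := gz a; rewrite negbK.
  have : L *m F = 0 by rewrite FE2 g0 mul0mx mulmx0.
  rewrite LFc => /eqP; rewrite col_mx_eq0 => /andP[_].
  rewrite [beta]mx11_scalar mul_scalar_mx scaler_eq0 (negPf beta0) /= => /eqP u00.
  by move: u0; rewrite u00 eqxx.
pose z := row i Fi.
have uz : u = (g i 0)^-1 *: map_mx (fun z : int => z%:~R : R) z.
  rewrite map_row -/F FE2 row_mul.
  have -> : row i g = (g i 0)%:M by apply/matrixP => a b; rewrite !ord1 !mxE eqxx mulr1n.
  by rewrite mul_scalar_mx scalerA mulVf // scale1r.
have [r r0 zr] := @int_orth _ z ltac:(lia).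
have := injperp r 0.
rewrite /pi_perp /lat_pt !dsub_mul -/u uz -scalemxAl -map_mxM zr !map_mx0 !mulmx0 scaler0.
move=> /(_ erefl) /(unit_inj Lu) rz.
move: r0; apply/negP; rewrite negbK; apply/eqP/matrixP => a b.
by move/matrixP: rz => /(_ a b); rewrite !mxE => /eqP; rewrite intr_eq0 => /eqP.
Qed.

Section TranscExists.
Local Open Scope classical_set_scope.
Lemma roots_countable (R : realType) (Q : {poly R}) : Q != 0 ->
  countable [set t : R | root Q t].
Proof.
move=> Q0; apply: finite_set_countable.
apply: contrapT => /(infinite_set_fset (size Q)) [B BQ szB].
have := @max_poly_roots _ Q B Q0.
rewrite fset_uniq ltnNge szB => H.
have Hall : all (root Q) B by apply/allP => x xB; exact: BQ.
by have := H Hall isT.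
Qed.

Lemma exists_transc (R : realType) : exists t : R,
  forall P : {poly int}, (map_poly (fun z : int => z%:~R) P).[t] = 0 -> P = 0.
Proof.
pose S := \bigcup_(P in [set P : {poly int} | P != 0])
            [set t : R | root (map_poly (fun z : int => z%:~R) P) t].
have cS : countable S.
  apply: bigcup_countable; first exact: countableP.
  move=> P /= P0; apply: roots_countable.
  by rewrite map_poly_eq0_id0 ?lead_coef_eq0 // intr_eq0 lead_coef_eq0.
have [t St] : exists t, ~ S t.
  apply: contrapT => /forallNP allS.
  have h := countable_lebesgue_measure0 cS.
  have sub : [set` `[(0:R), 1]%R] `<=` S by move=> x _; apply: contrapT; apply: allS.
  have := @le_measure _ _ _ (@lebesgue_measure R) _ _ _ _ sub.
  have mS : measurable S by apply: countable_measurable => //; exact: measurable_set1.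
  move=> /(_ (mem_set (measurable_itv _)) (mem_set mS)).
  move=> H; have H2 : (@lebesgue_measure R `[0%R,1%R] <= 0)%E by apply: (le_trans H); rewrite le_eqVlt; apply/orP; left; apply/eqP; exact: h.
  move: H2.
  by rewrite lebesgue_measure_itv /= lte_fin ltr01 oppr0 adde0 lee_fin ler10.
exists t => P Pt; apply: contrapT => P0; apply: St.
by exists P => //=; apply/eqP.
Qed.

End TranscExists.

Theorem proposition7 (R : realType) (n : nat) (A : 'M[R]_n) (p q : int) :
  (0 < n)%N ->
  diagonalizable (complexify A) ->
  (forall z : R[i], eigenvalue (complexify A) z ->
     z ^+ 2 - p%:~R * z - q%:~R = 0) ->
  p ^+ 2 + 4 * q < 0 ->
  (exists L : 'M[R]_(n + 2), generic_scheme L /\ self_similarity A L) /\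
  (forall (m : nat) (L : 'M[R]_(n + m)),
     generic_scheme L -> self_similarity A L -> (n + 2 <= n + m)%N).
Proof.
move=> n0 dA evA disc.
have HA := quad_of_diag dA evA.
split; last by move=> m L; exact (@lower_bound R n A p q disc HA n0 m L).
have discR : (p%:~R : R) ^+ 2 + 4 * q%:~R < 0.
  by rewrite -(ltr_int R) rmorphD rmorphXn rmorphM /= in disc.
have HAT : A^T *m A^T = p%:~R *: A^T + (q%:~R)%:M.
  by have := congr1 trmx HA; rewrite trmx_mul linearD linearZ /= tr_scalar_mx.
have [k [U [ek fU]]] := WW_final discR HAT.
case: k U ek fU => [|k] U ek fU; first by exfalso; have := n0; rewrite -ek.
subst n.
have [t tr] := exists_transc R.
have irr_s := irr_pow tr (ltn0Sn k.+1).
have ts : t ^+ k.+1 != t ^+ k.+2.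
  apply/negP => /eqP h.
  have irr1 := irr_pow tr (ltn0Sn 0).
  have : t ^+ k.+1 * (t - 1) = 0 by rewrite mulrBr mulr1 -exprSr -h subrr.
  move/eqP; rewrite mulf_eq0 expf_eq0 /= => /orP[/eqP t0|].
    by have := irr1 0 1; rewrite expr1 t0 !rmorph0 rmorph1 /= add0r mulr0 => /(_ erefl).
  rewrite subr_eq0 => /eqP t1.
  by have := irr1 (-1) 1; rewrite expr1 t1 rmorph1 rmorphN rmorph1 /= mulr1 addNr => /(_ erefl).
exists (Constr.LL A U t (t ^+ k.+2)).
exact: Constr.LL_generic HA fU tr irr_s ts.
Qed.
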